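(* A nondegenerate NSC $p$ satisfies Dissimilar Regularity if and only if it is an increasing NSC, i.e., it admits an NSC representation $(v,u,\{X_i\}_{i=1}^K)$ such that $v(A)\ge v(B)$ for every $i\le K$ and all nonempty $B\subseteq A\subseteq X_i$.
   Context: $X$ is a finite set, $\mathscr{A}$ the nonempty subsets; $p$ is a positive stochastic choice function; $A\cup y=A\cup\{y\}$. $a\sim_p b$ means $\frac{p(a,A)}{p(b,A)}=\frac{p(a,\{a,b\})}{p(b,\{a,b\})}$ for all $A\ni a,b$. NSC: there exist a partition $X_1,\dots,X_K$ of $X$, $u:X\to\mathbb{R}_{++}$, $v:\bigcup_i 2^{X_i}\to\mathbb{R}_+$ with $v(\emptyset)=0$, and $p(a,A)=\frac{v(A\cap X_i)}{\sum_j v(A\cap X_j)}\frac{u(a)}{\sum_{b\in A\cap X_i}u(b)}$ for $a\in A\cap X_i$. Nondegenerate: at most one $i$ for which some $a\in X_i$ satisfies $\frac{\sum_{x\in A_i}u(x)}{v(A_i)}=\frac{u(a)}{v(\{a\})}$ for all $A_i\subseteq X_i$ containing $a$. Dissimilar Regularity: for any $A\in\mathscr{A}$, $x\in A$ and $y\in X$ with $x\not\sim_p y$, $p(x,A\cup y)\le p(x,A)$. *)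

(* Defs.v *)
From HB Require Import structures.
From mathcomp Require Import all_boot all_order all_algebra.
From mathcomp Require Import reals.
Set Implicit Arguments. Unset Strict Implicit. Unset Printing Implicit Defensive.
Import Order.TTheory GRing.Theory Num.Theory.
Local Open Scope ring_scope.

Definition stochastic_choice (R : realType) (X : finType)
  (p : X -> {set X} -> R) : Prop :=
  (forall A : {set X}, A != set0 -> \sum_(a in A) p a A = 1) /\
  (forall (A : {set X}) (a : X), a \notin A -> p a A = 0) /\
  (forall (A : {set X}) (a : X), a \in A -> 0 <= p a A).

Definition positive_scf (R : realType) (X : finType)
  (p : X -> {set X} -> R) : Prop :=
  stochastic_choice p /\ forall (A : {set X}) (a : X), a \in A -> 0 < p a A.

Definition sim_p (R : realType) (X : finType) (p : X -> {set X} -> R)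
  (a b : X) : Prop :=
  forall A : {set X}, a \in A -> b \in A ->
    p a A / p b A = p a [set a; b] / p b [set a; b].

Definition dissimilar_regularity (R : realType) (X : finType)
  (p : X -> {set X} -> R) : Prop :=
  forall (A : {set X}) (x y : X), A != set0 -> x \in A -> ~ sim_p p x y ->
    p x (y |: A) <= p x A.

(* NSC representation (v, u, P): P is a partition of X (nonempty blocks),
   u : X -> R_{++}, v : subsets of blocks -> R_+ with v(emptyset) = 0
   (v is given as a function on all subsets, only its values on subsets
   of blocks are used). *)
Definition NSC_rep (R : realType) (X : finType) (p : X -> {set X} -> R)
  (P : {set {set X}}) (u : X -> R) (v : {set X} -> R) : Prop :=
  [/\ partition P [set: X],
      (forall x, 0 < u x),
      (forall (Xi B : {set X}), Xi \in P -> B \subset Xi -> 0 <= v B),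
      v set0 = 0 &
      forall (A : {set X}) (a : X) (Xi : {set X}), Xi \in P -> a \in A ->
        a \in Xi ->
        p a A = v (A :&: Xi) / (\sum_(Xj in P) v (A :&: Xj))
                * (u a / \sum_(b in A :&: Xi) u b)].

Definition degenerate_block (R : realType) (X : finType)
  (u : X -> R) (v : {set X} -> R) (Xi : {set X}) : Prop :=
  exists2 a, a \in Xi &
    forall Ai : {set X}, Ai \subset Xi -> a \in Ai ->
      (\sum_(x in Ai) u x) / v Ai = u a / v [set a].

Definition nondegenerate_rep (R : realType) (X : finType)
  (P : {set {set X}}) (u : X -> R) (v : {set X} -> R) : Prop :=
  forall Xi Xj : {set X}, Xi \in P -> Xj \in P ->
    degenerate_block u v Xi -> degenerate_block u v Xj -> Xi = Xj.

Definition nondegenerate_NSC (R : realType) (X : finType)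
  (p : X -> {set X} -> R) : Prop :=
  exists P u v, NSC_rep p P u v /\ nondegenerate_rep P u v.

Definition increasing_NSC (R : realType) (X : finType)
  (p : X -> {set X} -> R) : Prop :=
  exists P u v, NSC_rep p P u v /\
    forall Xi A B : {set X}, Xi \in P -> B != set0 -> B \subset A -> A \subset Xi ->
      v B <= v A.

(* Main.v *)
Require Import Defs.
From mathcomp Require Import all_boot all_order all_algebra.
From mathcomp Require Import reals.
From mathcomp Require Import ring lra.
Set Implicit Arguments. Unset Strict Implicit. Unset Printing Implicit Defensive.
Import Order.TTheory GRing.Theory Num.Theory.
Local Open Scope ring_scope.

Lemma div_pos_inv (R : realType) (a b : R) :
  0 <= a -> 0 <= b -> 0 < a / b -> 0 < a /\ 0 < b.
Proof.
move=> a0 b0 h; split; rewrite lt0r ?a0 ?b0 andbT; apply/eqP=> e; move: h;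
  by rewrite e ?mul0r ?invr0 ?mulr0 ltxx.
Qed.

Lemma sumu_pos (R : realType) (X : finType) (u : X -> R) (S : {set X}) a :
  (forall x, 0 < u x) -> a \in S -> 0 < \sum_(b in S) u b.
Proof.
move=> hu aS; rewrite (bigD1 a) //=.
apply: (lt_le_trans (hu a)); rewrite lerDl; apply: sumr_ge0 => i _; exact: ltW.
Qed.

Lemma same_block (X : finType) (P : {set {set X}}) (Xi Xj : {set X}) y :
  partition P [set: X] -> Xi \in P -> Xj \in P -> y \in Xi -> y \in Xj -> Xi = Xj.
Proof.
move=> /and3P [_ triv _] Hi Hj yi yj.
by rewrite -(def_pblock triv Hi yi) (def_pblock triv Hj yj).
Qed.

Lemma inter_other (X : finType) (P : {set {set X}}) Xi Xj (S : {set X}) :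
  partition P [set: X] -> Xi \in P -> Xj \in P -> Xi != Xj -> S \subset Xi ->
  S :&: Xj = set0.
Proof.
move=> hp Hi Hj ne sS; apply/setP=> z; rewrite !inE.
apply/andP=> [[zS zj]]; move/eqP: ne; apply.
exact: (same_block hp Hi Hj (subsetP sS z zS) zj).
Qed.

Lemma inter_self (X : finType) (Xi S : {set X}) : S \subset Xi -> S :&: Xi = S.
Proof. by move/setIidPl. Qed.

Lemma pos_facts (R : realType) (X : finType) (p : X -> {set X} -> R) P u v
  (A : {set X}) a (Xi : {set X}) :
  positive_scf p -> NSC_rep p P u v -> Xi \in P -> a \in A -> a \in Xi ->
  0 < v (A :&: Xi) /\ 0 < \sum_(Xj in P) v (A :&: Xj).
Proof.
move=> [_ hpos] [hpart hu hv hv0 hp] Hi aA ai.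
have := hpos A a aA; rewrite (hp A a Xi) //.
have U : 0 < u a / \sum_(b in A :&: Xi) u b.
  by rewrite divr_gt0 // (@sumu_pos _ _ _ _ a hu) // inE aA ai.
rewrite pmulr_lgt0 //; apply: div_pos_inv.
  by apply: (hv Xi) => //; apply: subsetIr.
by apply: sumr_ge0 => Xj Hj; apply: (hv Xj) => //; apply: subsetIr.
Qed.

Lemma D_split (R : realType) (X : finType) (P : {set {set X}}) (v : {set X} -> R)
  (A : {set X}) y (Xj : {set X}) :
  partition P [set: X] -> Xj \in P -> y \in Xj ->
  \sum_(Xk in P) v ((y |: A) :&: Xk) =
     v ((y |: A) :&: Xj) + \sum_(Xk in P | Xk != Xj) v (A :&: Xk) /\
  \sum_(Xk in P) v (A :&: Xk) =
     v (A :&: Xj) + \sum_(Xk in P | Xk != Xj) v (A :&: Xk).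
Proof.
move=> hp Hj yj; split; rewrite (bigD1 Xj) //=; congr (_ + _).
apply: eq_bigr => Xk /andP [Hk ne]; congr (v _).
rewrite setIUl (@inter_other _ P Xj Xk [set y]) ?set0U // ?sub1set //.
by rewrite eq_sym.
Qed.
Lemma nonsim (R : realType) (X : finType) (p : X -> {set X} -> R) P u v
  (Xi Xj : {set X}) x y :
  positive_scf p -> NSC_rep p P u v -> nondegenerate_rep P u v ->
  Xi \in P -> Xj \in P -> Xi != Xj -> x \in Xi -> y \in Xj -> ~ sim_p p x y.
Proof.
move=> hpos hrep hnd Hi Hj ne xi yj hs.
have [hpart hu hv hv0 hp] := hrep.
have neji : Xj != Xi by rewrite eq_sym.
have x1 : [set x] \subset Xi by rewrite sub1set.
have y1 : [set y] \subset Xj by rewrite sub1set.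
have [px1 pD2] := pos_facts (A:=[set x; y]) hpos hrep Hi (setU11 _ _) xi.
have [py1 _] := pos_facts (A:=[set x; y]) hpos hrep Hj (setU1r _ (set11 _)) yj.
have exy : [set x; y] :&: Xi = [set x].
  by rewrite setIUl (inter_self x1) (inter_other hpart Hj Hi neji y1) setU0.
have eyx : [set x; y] :&: Xj = [set y].
  by rewrite setIUl (inter_self y1) (inter_other hpart Hi Hj ne x1) set0U.
rewrite exy eyx in px1 py1.
have xy : p x [set x; y] / p y [set x; y] = v [set x] / v [set y].
  rewrite (hp _ x Xi) ?(setU11 _ _) // (hp _ y Xj) ?(setU1r _ (set11 _)) //.
  rewrite exy eyx !big_set1.
  by field; rewrite !gt_eqF.
have ne0 := ne; move/eqP: ne0; apply; apply: hnd => //.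
- exists x => // Ai sAi xAi.
  have := hs (y |: Ai) (setU1r _ xAi) (setU11 _ _).
  have [pA pD] := pos_facts (A:=y |: Ai) hpos hrep Hi (setU1r _ xAi) xi.
  have e1 : (y |: Ai) :&: Xi = Ai.
    by rewrite setIUl (inter_self sAi) (inter_other hpart Hj Hi neji y1) set0U.
  have e2 : (y |: Ai) :&: Xj = [set y].
    by rewrite setIUl (inter_self y1) (inter_other hpart Hi Hj ne sAi) setU0.
  rewrite (hp _ x Xi) ?(setU1r _ xAi) // (hp _ y Xj) ?(setU11 _ _) // xy e1 e2 big_set1.
  rewrite e1 in pA.
  have Sp : 0 < \sum_(b in Ai) u b by apply: (@sumu_pos _ _ _ _ x hu).
  move=> h.
  have h2 : v Ai * u x / ((\sum_(b in Ai) u b) * v [set y]) = v [set x] / v[set y].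
    by rewrite -h; field; rewrite !gt_eqF.
  move/eqP: h2; rewrite eqr_div; last 2 first.
    - by rewrite mulf_neq0 // gt_eqF.
    - by rewrite gt_eqF.
  move=> /eqP h2.
  apply/eqP; rewrite eqr_div; last 2 first.
    - by rewrite gt_eqF.
    - by rewrite gt_eqF.
  apply/eqP.
  apply: (mulIf (lt0r_neq0 py1)).
  transitivity (v [set x] * ((\sum_(b in Ai) u b) * v [set y])); first by ring.
  by rewrite -h2; ring.
- exists y => // Aj sAj yAj.
  have := hs (x |: Aj) (setU11 _ _) (setU1r _ yAj).
  have [pA pD] := pos_facts (A:=x |: Aj) hpos hrep Hj (setU1r _ yAj) yj.
  have e1 : (x |: Aj) :&: Xj = Aj.
    by rewrite setIUl (inter_self sAj) (inter_other hpart Hi Hj ne x1) set0U.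
  have e2 : (x |: Aj) :&: Xi = [set x].
    by rewrite setIUl (inter_self x1) (inter_other hpart Hj Hi neji sAj) setU0.
  rewrite (hp _ x Xi) ?(setU11 _ _) // (hp _ y Xj) ?(setU1r _ yAj) // xy e1 e2 big_set1.
  rewrite e1 in pA.
  have Sp : 0 < \sum_(b in Aj) u b by apply: (@sumu_pos _ _ _ _ y hu).
  move=> h.
  have h2 : v [set x] * (\sum_(b in Aj) u b) / (v Aj * u y) = v [set x] / v[set y].
    by rewrite -h; field; rewrite !gt_eqF.
  move/eqP: h2; rewrite eqr_div; last 2 first.
    - by rewrite mulf_neq0 // gt_eqF.
    - by rewrite gt_eqF.
  move=> /eqP h2.
  apply/eqP; rewrite eqr_div; last 2 first.
    - by rewrite gt_eqF.
    - by rewrite gt_eqF.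
  apply/eqP.
  apply: (mulfI (lt0r_neq0 px1)).
  transitivity (v [set x] * (\sum_(b in Aj) u b) * v [set y]); first by ring.
  by rewrite h2; ring.
Qed.

Lemma shift (R : realType) (X : finType) (p : X -> {set X} -> R) P u v
  (Xi Xj A : {set X}) x y :
  NSC_rep p P u v -> Xi \in P -> Xj \in P -> Xi != Xj -> x \in Xi -> y \in Xj ->
  x \in A ->
  let E := \sum_(Xk in P | Xk != Xj) v (A :&: Xk) in
  let U := u x / \sum_(b in A :&: Xi) u b in
  p x (y |: A) = v (A :&: Xi) / (v ((y |: A) :&: Xj) + E) * U /\
  p x A = v (A :&: Xi) / (v (A :&: Xj) + E) * U /\
  \sum_(Xk in P) v ((y |: A) :&: Xk) = v ((y |: A) :&: Xj) + E /\
  \sum_(Xk in P) v (A :&: Xk) = v (A :&: Xj) + E.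
Proof.
move=> hrep Hi Hj ne xi yj xA E U.
have [hpart hu hv hv0 hp] := hrep.
have [D1 D2] := D_split v A hpart Hj yj.
have eI : (y |: A) :&: Xi = A :&: Xi.
  rewrite setIUl (@inter_other _ P Xj Xi [set y]) ?set0U // ?sub1set //.
  by rewrite eq_sym.
split; first by rewrite (hp _ x Xi) ?setU1r // eI D1.
by rewrite (hp _ x Xi) // D2.
Qed.

Lemma ratio_same (R : realType) (X : finType) (p : X -> {set X} -> R) P u v
  (Xi A : {set X}) x y :
  positive_scf p -> NSC_rep p P u v -> Xi \in P -> x \in Xi -> y \in Xi ->
  x \in A -> y \in A -> p x A / p y A = u x / u y.
Proof.
move=> hpos hrep Hi xi yi xA yA.
have [hpart hu hv hv0 hp] := hrep.
have [pv pD] := pos_facts hpos hrep Hi xA xi.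
have Sp : 0 < \sum_(b in A :&: Xi) u b by apply: (@sumu_pos _ _ _ _ x hu); rewrite inE xA.
have ux := hu x; have uy := hu y.
rewrite (hp _ x Xi) // (hp _ y Xi) //.
by field; rewrite !gt_eqF.
Qed.

Lemma back_dir (R : realType) (X : finType) (p : X -> {set X} -> R) P u v :
  positive_scf p -> NSC_rep p P u v ->
  (forall Xi A B : {set X}, Xi \in P -> B != set0 -> B \subset A -> A \subset Xi ->
      v B <= v A) -> dissimilar_regularity p.
Proof.
move=> hpos hrep hmon A x y An0 xA nsim.
have [hpart hu hv hv0 hp] := hrep.
have cov : cover P = [set: X] by case/and3P: hpart => /eqP.
have Hx : pblock P x \in P by apply: pblock_mem; rewrite cov inE.
have Hy : pblock P y \in P by apply: pblock_mem; rewrite cov inE.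
have xi : x \in pblock P x by rewrite mem_pblock cov inE.
have yj : y \in pblock P y by rewrite mem_pblock cov inE.
set Xi := pblock P x in Hx xi *; set Xj := pblock P y in Hy yj *.
case: (eqVneq Xi Xj) => [eij | ne].
  exfalso; apply: nsim => B xB yB.
  rewrite (ratio_same hpos hrep Hx xi _ xB yB) ?eij //.
  by rewrite (ratio_same hpos hrep Hx xi _ (setU11 _ _) (setU1r _ (set11 _))) ?eij.
have [e1 [e2 [D1 D2]]] := shift hrep Hx Hy ne xi yj xA.
rewrite e1 e2.
have [pv pD] := pos_facts hpos hrep Hx xA xi.
rewrite D2 in pD.
have Sp : 0 < \sum_(b in A :&: Xi) u b by apply: (@sumu_pos _ _ _ _ x hu); rewrite inE xA.
have U0 : 0 <= u x / \sum_(b in A :&: Xi) u b by rewrite divr_ge0 // ltW.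
have mon : v (A :&: Xj) <= v ((y |: A) :&: Xj).
  have [e0 | n0] := eqVneq (A :&: Xj) set0.
    by rewrite e0 hv0; apply: (hv Xj) => //; apply: subsetIr.
  apply: (hmon Xj) => //; last by apply: subsetIr.
  by apply: setSI; apply: subsetUr.
apply: ler_wpM2r => //; apply: ler_wpM2l; first exact: ltW.
rewrite lef_pV2 ?posrE //; first by rewrite lerD2r.
by apply: (lt_le_trans pD); rewrite lerD2r.
Qed.

Lemma fwd_step (R : realType) (X : finType) (p : X -> {set X} -> R) P u v
  (Xi Xj B : {set X}) x y :
  positive_scf p -> NSC_rep p P u v -> nondegenerate_rep P u v ->
  dissimilar_regularity p ->
  Xi \in P -> Xj \in P -> Xi != Xj -> x \in Xi -> y \in Xj -> B \subset Xj ->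
  v B <= v (y |: B).
Proof.
move=> hpos hrep hnd hdr Hi Hj ne xi yj sB.
have [hpart hu hv hv0 hp] := hrep.
have xA : x \in x |: B by apply: setU11.
have [e1 [e2 [D1 D2]]] := shift hrep Hi Hj ne xi yj xA.
have h := hdr (x |: B) x y (introT (set0Pn _) (ex_intro _ x xA)) xA
   (nonsim hpos hrep hnd Hi Hj ne xi yj).
rewrite e1 e2 in h.
have [pv pD] := pos_facts hpos hrep Hi xA xi.
have [_ pD'] := pos_facts hpos hrep Hi (setU1r y xA) xi.
rewrite D2 in pD; rewrite D1 in pD'.
have Sp : 0 < \sum_(b in (x |: B) :&: Xi) u b.
  by apply: (@sumu_pos _ _ _ _ x hu); rewrite inE xA.
have x1 : [set x] \subset Xi by rewrite sub1set.
have eB : (x |: B) :&: Xj = B.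
  by rewrite setIUl (inter_self sB) (inter_other hpart Hi Hj ne x1) set0U.
have eyB : (y |: (x |: B)) :&: Xj = y |: B.
  rewrite setIUl eB (inter_self (_ : [set y] \subset Xj)) //.
  by rewrite sub1set.
rewrite eB eyB in h pD pD'.
rewrite ler_pM2r ?divr_gt0 // ler_pM2l // lef_pV2 ?posrE // in h.
by rewrite lerD2r in h.
Qed.

Lemma mono_ind (R : realType) (X : finType) (v : {set X} -> R) (Xj : {set X}) :
  (forall (B : {set X}) y, B \subset Xj -> y \in Xj -> v B <= v (y |: B)) ->
  forall n (A B : {set X}), #|A :\: B| = n -> B \subset A -> A \subset Xj ->
  v B <= v A.
Proof.
move=> hs; elim=> [|n IH] A B hn sBA sA.
  have -> : A = B.
    apply/eqP; rewrite eqEsubset sBA andbT.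
    by rewrite -setD_eq0 -cards_eq0 hn.
  by [].
have : A :\: B != set0 by rewrite -cards_eq0 hn.
case/set0Pn => y; rewrite inE => /andP [nyB yA].
apply: (le_trans (hs B y (subset_trans sBA sA) (subsetP sA y yA))).
apply: (IH A (y |: B)) => //.
  move: hn; rewrite (cardsD1 y) inE nyB yA /= add1n => -[<-].
  by rewrite setDDl setUC.
by rewrite subUset sub1set yA sBA.
Qed.

Theorem proposition8 (R : realType) (X : finType) (p : X -> {set X} -> R) :
  positive_scf p -> nondegenerate_NSC p ->
  (dissimilar_regularity p <-> increasing_NSC p).
Proof.
move=> hpos [P [u [v [hrep hnd]]]]; split; last first.
  by move=> [P' [u' [v' [hrep' hmon]]]]; exact: (back_dir hpos hrep' hmon).
move=> hdr.
have [hpart hu hv hv0 hp] := hrep.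
have nz0 : set0 \notin P by case/and3P: hpart.
case: (boolP [exists Xa in P, exists Xb in P, Xa != Xb]).
  case/exists_inP => Xa Ha /exists_inP [Xb Hb nab].
  exists P, u, v; split => // Xj A B Hj Bn0 sBA sA.
  have [Xi [Hi nij]] : exists Xi, Xi \in P /\ Xi != Xj.
    case: (eqVneq Xa Xj) => [eaj | naj]; last by exists Xa.
    by exists Xb; split => //; rewrite -eaj eq_sym.
  have : Xi != set0 by apply: contraNneq nz0 => <-.
  case/set0Pn => x xi.
  apply: (mono_ind (fun B0 y sB yj => fwd_step hpos hrep hnd hdr Hi Hj nij xi yj sB)
    (erefl _) sBA sA).
rewrite negb_exists_in => /forall_inP hall.
have same : forall Xa Xb, Xa \in P -> Xb \in P -> Xa = Xb.
  move=> Xa Xb Ha Hb; move: (hall Xa Ha); rewrite negb_exists_in => /forall_inP /(_ Xb Hb).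
  by rewrite negbK => /eqP.
have sum1 : forall (w : {set X} -> R) (A Xi : {set X}), Xi \in P ->
    \sum_(Xj in P) w (A :&: Xj) = w (A :&: Xi).
  move=> w A Xi Hi; rewrite (bigD1 Xi) //= big1 ?addr0 // => Xk /andP [Hk nk].
  by move: nk; rewrite (same Xk Xi Hk Hi) eqxx.
exists P, u, (fun S => (S != set0)%:R); split; last first.
  move=> Xi A B Hi Bn0 sBA sA /=; rewrite Bn0.
  have -> : A != set0.
    by apply/set0Pn; case/set0Pn: Bn0 => b bB; exists b; exact: (subsetP sBA b bB).
  by [].
split => //; first by case: eqP.
move=> A a Xi Hi aA ai.
have [pv _] := pos_facts hpos hrep Hi aA ai.
rewrite (hp A a Xi) // !(sum1 _ _ Xi) //.
have -> : A :&: Xi != set0 by apply/set0Pn; exists a; rewrite inE aA ai.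
rewrite divff; last by rewrite gt_eqF.
rewrite (sum1 (fun S => (S != set0)%:R) A Xi Hi) /=.
have -> : A :&: Xi != set0 by apply/set0Pn; exists a; rewrite inE aA ai.
by rewrite divr1.
Qed.
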